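(* Let $K$ be a perfect field, $k\subset K$ a subfield, and $W$ a simple two-sided vector space with $\dim_K({}_KW)=n<\infty$ and $\dim_K(W_K)=m<\infty$. If $i\in\mathbb{Z}$ is even, then $\dim_K({}_KW^{i*})=n$ and $\dim_K(W^{i*}_K)=m$. If $i$ is odd, then $\dim_K({}_KW^{i*})=m$ and $\dim_K(W^{i*}_K)=n$.
   Context: A two-sided vector space is a $K\otimes_kK$-module; left (resp. right) multiplication by $K$ is the action of $K\otimes1$ (resp. $1\otimes K$); ${}_KV$, $V_K$ denote the restrictions of scalars. The right dual $V^*$ is $\operatorname{Hom}_K(V_K,K)$ with $(a\cdot\psi\cdot b)(x)=a\psi(bx)$; the left dual ${}^*V$ is $\operatorname{Hom}_K({}_KV,K)$ with $(a\cdot\phi\cdot b)(x)=b\phi(xa)$. Iterated duals: $V^{0*}=V$, $V^{i*}=(V^{(i-1)*})^*$ for $i>0$, $V^{i*}={}^*(V^{(i+1)*})$ for $i<0$. *)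

(* Defs.v *)
From HB Require Import structures.
From mathcomp Require Import all_boot all_algebra.
From Stdlib Require Import ProofIrrelevance FunctionalExtensionality.

Set Implicit Arguments.
Unset Strict Implicit.
Unset Printing Implicit Defensive.

Import GRing.Theory.
Local Open Scope ring_scope.

(* A perfect field: characteristic 0, or characteristic p with surjective
   Frobenius map x |-> x^p. *)
Definition perfect_field (K : fieldType) : Prop :=
  forall p : nat, p \in [pchar K] -> forall x : K, exists y : K, y ^+ p = x.

(* A two-sided vector space over K relative to the subfield k of K, i.e. a
   K (x)_k K-module: an abelian group with a left and a right K-action that
   commute with each other and agree on k. *)
Record tsvs (K : fieldType) (k : {pred K}) := TSVS {
  tsv_car :> Type;
  tsv_zero : tsv_car;
  tsv_add : tsv_car -> tsv_car -> tsv_car;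
  tsv_opp : tsv_car -> tsv_car;
  tsv_lact : K -> tsv_car -> tsv_car;
  tsv_ract : tsv_car -> K -> tsv_car;
  tsv_addA : forall x y z, tsv_add x (tsv_add y z) = tsv_add (tsv_add x y) z;
  tsv_addC : forall x y, tsv_add x y = tsv_add y x;
  tsv_add0 : forall x, tsv_add tsv_zero x = x;
  tsv_addN : forall x, tsv_add (tsv_opp x) x = tsv_zero;
  tsv_lactDr : forall a x y, tsv_lact a (tsv_add x y) = tsv_add (tsv_lact a x) (tsv_lact a y);
  tsv_lactDl : forall a b x, tsv_lact (a + b) x = tsv_add (tsv_lact a x) (tsv_lact b x);
  tsv_lactA : forall a b x, tsv_lact (a * b) x = tsv_lact a (tsv_lact b x);
  tsv_lact1 : forall x, tsv_lact 1 x = x;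
  tsv_ractDl : forall x y b, tsv_ract (tsv_add x y) b = tsv_add (tsv_ract x b) (tsv_ract y b);
  tsv_ractDr : forall x a b, tsv_ract x (a + b) = tsv_add (tsv_ract x a) (tsv_ract x b);
  tsv_ractA : forall x a b, tsv_ract x (a * b) = tsv_ract (tsv_ract x a) b;
  tsv_ract1 : forall x, tsv_ract x 1 = x;
  tsv_lractC : forall a x b, tsv_ract (tsv_lact a x) b = tsv_lact a (tsv_ract x b);
  tsv_central : forall c x, c \in k -> tsv_lact c x = tsv_ract x c
}.

Section Ops.
Variables (K : fieldType) (k : {pred K}).

Definition tsv_op (V : tsvs k) : tsvs k.
Proof.
refine (@TSVS K k V (tsv_zero V) (@tsv_add _ _ V) (@tsv_opp _ _ V)
  (fun a x => tsv_ract x a) (fun x b => tsv_lact b x) _ _ _ _ _ _ _ _ _ _ _ _ _ _).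
- exact: tsv_addA.
- exact: tsv_addC.
- exact: tsv_add0.
- exact: tsv_addN.
- by move=> a x y; rewrite tsv_ractDl.
- by move=> a b x; rewrite tsv_ractDr.
- by move=> a b x; rewrite mulrC tsv_ractA.
- exact: tsv_ract1.
- by move=> x y b; rewrite tsv_lactDr.
- by move=> x a b; rewrite tsv_lactDl.
- by move=> x a b; rewrite mulrC tsv_lactA.
- exact: tsv_lact1.
- by move=> a x b; rewrite tsv_lractC.
- by move=> c x kc; rewrite tsv_central.
Defined.

Section RDual.
Variable V : tsvs k.

Definition rlin (f : V -> K) : Prop :=
  (forall x y, f (tsv_add x y) = f x + f y) /\
  (forall x b, f (tsv_ract x b) = f x * b).

Definition rdual_car := {f : V -> K | rlin f}.

Lemma rd_eq (f g : rdual_car) : (forall x, proj1_sig f x = proj1_sig g x) -> f = g.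
Proof.
case: f g => [f hf] [g hg] /= e.
have efg : f = g by apply: functional_extensionality.
subst g; f_equal; exact: proof_irrelevance.
Qed.

Lemma rlin0 : rlin (fun _ => 0).
Proof. by split=> *; rewrite ?addr0 ?mul0r. Qed.

Lemma rlinD f g : rlin f -> rlin g -> rlin (fun x => f x + g x).
Proof.
move=> [f1 f2] [g1 g2]; split=> *; rewrite ?f1 ?g1 ?f2 ?g2.
  by rewrite addrACA.
by rewrite mulrDl.
Qed.

Lemma rlinN f : rlin f -> rlin (fun x => - f x).
Proof. by move=> [f1 f2]; split=> *; rewrite ?f1 ?f2 ?opprD ?mulNr. Qed.

Lemma rlinZl a f : rlin f -> rlin (fun x => a * f x).
Proof. by move=> [f1 f2]; split=> *; rewrite ?f1 ?f2 ?mulrDr ?mulrA. Qed.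

Lemma rlinZr b f : rlin f -> rlin (fun x => f (tsv_lact b x)).
Proof.
move=> [f1 f2]; split=> *; first by rewrite tsv_lactDr f1.
by rewrite -tsv_lractC f2.
Qed.

Definition rd_zero : rdual_car := exist _ _ rlin0.
Definition rd_add (f g : rdual_car) : rdual_car :=
  exist _ _ (rlinD (proj2_sig f) (proj2_sig g)).
Definition rd_opp (f : rdual_car) : rdual_car := exist _ _ (rlinN (proj2_sig f)).
Definition rd_lact a (f : rdual_car) : rdual_car := exist _ _ (rlinZl a (proj2_sig f)).
Definition rd_ract (f : rdual_car) b : rdual_car := exist _ _ (rlinZr b (proj2_sig f)).

(* The right dual V^* = Hom_K(V_K, K), with (a . psi . b)(x) = a psi(b x). *)
Definition rdual : tsvs k.
Proof.
refine (@TSVS K k rdual_car rd_zero rd_add rd_opp rd_lact rd_ract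
  _ _ _ _ _ _ _ _ _ _ _ _ _ _);
  intros; apply: rd_eq => w0 /=.
- by rewrite addrA.
- by rewrite addrC.
- by rewrite add0r.
- by rewrite addNr.
- by rewrite mulrDr.
- by rewrite mulrDl.
- by rewrite mulrA.
- by rewrite mul1r.
- by [].
- by case: x => f [f1 f2] /=; rewrite tsv_lactDl f1.
- by rewrite tsv_lactA.
- by rewrite tsv_lact1.
- by [].
- by case: x => f [f1 f2] /=; rewrite tsv_central // f2 mulrC.
Defined.
End RDual.

(* The left dual *V = Hom_K(_K V, K), with (a . phi . b)(x) = b phi(x a).
   It is literally the opposite of the right dual of the opposite of V. *)
Definition ldual (V : tsvs k) : tsvs k := tsv_op (rdual (tsv_op V)).

(* Iterated duals V^{i*}, i in Z: V^{0*} = V, V^{i*} = (V^{(i-1)*})^* for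
   i > 0, V^{i*} = *(V^{(i+1)*}) for i < 0.  (Negz n denotes -(n+1).) *)
Definition idual (i : int) (V : tsvs k) : tsvs k :=
  match i with
  | Posz n => iter n rdual V
  | Negz n => iter n.+1 ldual V
  end.

Definition lcomb (V : tsvs k) n (c : 'I_n -> K) (b : 'I_n -> V) : V :=
  \big[@tsv_add _ _ V / tsv_zero V]_(i < n) tsv_lact (c i) (b i).
Definition rcomb (V : tsvs k) n (c : 'I_n -> K) (b : 'I_n -> V) : V :=
  \big[@tsv_add _ _ V / tsv_zero V]_(i < n) tsv_ract (b i) (c i).

Definition ldim (V : tsvs k) (n : nat) : Prop :=
  exists b : 'I_n -> V,
    (forall c, lcomb c b = tsv_zero V -> forall i, c i = 0) /\
    (forall x : V, exists c, x = lcomb c b).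

Definition rdim (V : tsvs k) (n : nat) : Prop :=
  exists b : 'I_n -> V,
    (forall c, rcomb c b = tsv_zero V -> forall i, c i = 0) /\
    (forall x : V, exists c, x = rcomb c b).

Definition tsv_sub (V : tsvs k) (S : V -> Prop) : Prop :=
  S (tsv_zero V) /\
  (forall x y, S x -> S y -> S (tsv_add x y)) /\
  (forall a x, S x -> S (tsv_lact a x)) /\
  (forall x b, S x -> S (tsv_ract x b)).

Definition tsv_simple (V : tsvs k) : Prop :=
  (exists x : V, x <> tsv_zero V) /\
  forall S : V -> Prop, tsv_sub S ->
    (forall x, S x -> x = tsv_zero V) \/ (forall x, S x).

End Ops.

(* Main.v *)
Require Import Defs.
From HB Require Import structures.
From mathcomp Require Import all_boot all_algebra.
From Stdlib Require Import ClassicalEpsilon Classical ProofIrrelevance FunctionalExtensionality.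

Set Implicit Arguments.
Unset Strict Implicit.
Unset Printing Implicit Defensive.
Import GRing.Theory.
Local Open Scope ring_scope.



HB.instance Definition tsv_comlaw (K : fieldType) (k : {pred K}) (V : tsvs k) :=
  Monoid.isComLaw.Build (tsv_car V) (tsv_zero V) (@tsv_add K k V)
    (@tsv_addA K k V) (@tsv_addC K k V) (@tsv_add0 K k V).

Lemma tsv_addx0 (K : fieldType) (k : {pred K}) (V : tsvs k) (x : V) :
  tsv_add x (tsv_zero V) = x.
Proof. by rewrite tsv_addC tsv_add0. Qed.

Lemma tsv_cancel (K : fieldType) (k : {pred K}) (V : tsvs k) (x y z : V) :
  tsv_add x y = tsv_add x z -> y = z.
Proof.
move=> h; rewrite -(tsv_add0 y) -(tsv_add0 z) -(tsv_addN x) -!tsv_addA h //.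
Qed.

Lemma tsv_cancelr (K : fieldType) (k : {pred K}) (V : tsvs k) (x y z : V) :
  tsv_add y x = tsv_add z x -> y = z.
Proof. by rewrite (tsv_addC y) (tsv_addC z); apply: tsv_cancel. Qed.

Lemma tsv_idem (K : fieldType) (k : {pred K}) (V : tsvs k) (x : V) :
  tsv_add x x = x -> x = tsv_zero V.
Proof. by move=> h; apply: (@tsv_cancel _ _ V x); rewrite h tsv_addx0. Qed.

Lemma tsv_lact0x (K : fieldType) (k : {pred K}) (V : tsvs k) (x : V) :
  tsv_lact 0 x = tsv_zero V.
Proof. by apply: tsv_idem; rewrite -tsv_lactDl addr0. Qed.

Lemma tsv_lactx0 (K : fieldType) (k : {pred K}) (V : tsvs k) (a : K) :
  tsv_lact a (tsv_zero V) = tsv_zero V.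
Proof. by apply: tsv_idem; rewrite -tsv_lactDr tsv_add0. Qed.

Lemma tsv_ractx0 (K : fieldType) (k : {pred K}) (V : tsvs k) (x : V) :
  tsv_ract x 0 = tsv_zero V.
Proof. by apply: tsv_idem; rewrite -tsv_ractDr addr0. Qed.

Lemma tsv_ract0x (K : fieldType) (k : {pred K}) (V : tsvs k) (b : K) :
  tsv_ract (tsv_zero V) b = tsv_zero V.
Proof. by apply: tsv_idem; rewrite -tsv_ractDl tsv_add0. Qed.

Lemma ldim_op (K : fieldType) (k : {pred K}) (V : tsvs k) n :
  ldim (tsv_op V) n <-> rdim V n.
Proof. by split=> -[b h]; exists b. Qed.

Lemma rdim_op (K : fieldType) (k : {pred K}) (V : tsvs k) n :
  rdim (tsv_op V) n <-> ldim V n.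
Proof. by split=> -[b h]; exists b. Qed.

Lemma sub_op (K : fieldType) (k : {pred K}) (V : tsvs k) (S : V -> Prop) :
  tsv_sub (V := tsv_op V) S -> tsv_sub S.
Proof.
case=> h0 [h1 [h2 h3]]; split=> //; split=> //; split.
  by move=> a x hx; exact: (h3 x a hx).
by move=> x b hx; exact: (h2 b x hx).
Qed.

Lemma sub_op' (K : fieldType) (k : {pred K}) (V : tsvs k) (S : V -> Prop) :
  tsv_sub S -> tsv_sub (V := tsv_op V) S.
Proof.
case=> h0 [h1 [h2 h3]]; split=> //; split=> //; split.
  by move=> a x hx; exact: (h3 x a hx).
by move=> x b hx; exact: (h2 b x hx).
Qed.

Lemma simple_op (K : fieldType) (k : {pred K}) (V : tsvs k) :
  tsv_simple V -> tsv_simple (tsv_op V).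
Proof.
case=> [[x hx] h]; split; first by exists x.
by move=> S /sub_op /h.
Qed.

Lemma iso_transfer (K : fieldType) (k : {pred K}) (V U : tsvs k) (f : V -> U) :
 (forall x y, f (tsv_add x y) = tsv_add (f x) (f y)) ->
 (forall a x, f (tsv_lact a x) = tsv_lact a (f x)) ->
 (forall x b, f (tsv_ract x b) = tsv_ract (f x) b) ->
 (forall x, f x = tsv_zero U -> x = tsv_zero V) ->
 (forall u, exists x, u = f x) ->
 forall n m, tsv_simple V /\ ldim V n /\ rdim V m ->
   tsv_simple U /\ ldim U n /\ rdim U m.
Proof.
move=> fadd flact fract fker fsurj n m [[[x0 hx0] hS] [[b [bi bs]] [e [ei es]]]].
have f0 : f (tsv_zero V) = tsv_zero U.
  by apply: tsv_idem; rewrite -fadd tsv_add0.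
have fl c : f (lcomb c b) = lcomb c (fun i => f (b i)).
  rewrite /lcomb (big_morph f fadd f0); apply: eq_bigr => i _; exact: flact.
have fr c : f (rcomb c e) = rcomb c (fun i => f (e i)).
  rewrite /rcomb (big_morph f fadd f0); apply: eq_bigr => i _; exact: fract.
split; [split|split].
- by exists (f x0) => /fker.
- move=> S hsub.
  have hsub' : tsv_sub (fun x => S (f x)).
    case: hsub => h0 [h1 [h2 h3]]; split; first by rewrite f0.
    split; first by move=> x y hx hy; rewrite fadd; apply: h1.
    split; first by move=> a x hx; rewrite flact; apply: h2.
    by move=> x c hx; rewrite fract; apply: h3.
  case: (hS _ hsub') => H; [left|right] => u.
    by have [x ->] := fsurj u => /H ->.
  by have [x ->] := fsurj u; apply: H.
- exists (fun i => f (b i)); split.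
    by move=> c; rewrite -fl => /fker; apply: bi.
  by move=> u; have [x ->] := fsurj u; have [c ->] := bs x; exists c; apply: fl.
- exists (fun i => f (e i)); split.
    by move=> c; rewrite -fr => /fker; apply: ei.
  by move=> u; have [x ->] := fsurj u; have [c ->] := es x; exists c; apply: fr.
Qed.



Definition opx (K : fieldType) (k : {pred K}) (V : tsvs k) (s : seq (K * K)) (x : V) : V :=
  \big[@tsv_add _ _ V/tsv_zero V]_(p <- s) tsv_lact p.1 (tsv_ract x p.2).

Section Opx.
Variables (K : fieldType) (k : {pred K}) (V : tsvs k).
Implicit Types (s t : seq (K * K)) (x y : V).

Lemma opxD s x y : opx s (tsv_add x y) = tsv_add (opx s x) (opx s y).
Proof.
rewrite /opx -big_split /=; apply: eq_bigr => p _.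
by rewrite tsv_ractDl tsv_lactDr.
Qed.

Lemma opx0 s : opx s (tsv_zero V) = tsv_zero V.
Proof. by rewrite /opx big1 // => p _; rewrite tsv_ract0x tsv_lactx0. Qed.

Lemma opxL s a x : opx s (tsv_lact a x) = tsv_lact a (opx s x).
Proof.
rewrite /opx (big_morph (tsv_lact a) (tsv_lactDr a) (@tsv_lactx0 _ _ V a)).
by apply: eq_bigr => p _; rewrite tsv_lractC -!tsv_lactA mulrC.
Qed.

Lemma opxR s b x : opx s (tsv_ract x b) = tsv_ract (opx s x) b.
Proof.
rewrite /opx (big_morph (fun z : V => tsv_ract z b) (fun x y => @tsv_ractDl _ _ V x y b) (@tsv_ract0x _ _ V b)).
by apply: eq_bigr => p _; rewrite tsv_lractC -!tsv_ractA mulrC.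
Qed.

Lemma opx_comm s t x : opx s (opx t x) = opx t (opx s x).
Proof.
have -> : opx t (opx s x) =
    \big[@tsv_add _ _ V/tsv_zero V]_(p <- s) opx t (tsv_lact p.1 (tsv_ract x p.2)).
  exact: (big_morph (opx t) (opxD t) (opx0 t)).
rewrite {1}/opx; apply: eq_bigr => p _.
by rewrite opxL opxR.
Qed.

Lemma opx_cat s t x : opx (s ++ t) x = tsv_add (opx s x) (opx t x).
Proof. by rewrite /opx big_cat. Qed.

Lemma opx_nil x : opx [::] x = tsv_zero V.
Proof. by rewrite /opx big_nil. Qed.

Lemma opx_one x : opx [:: (1, 1)] x = x.
Proof. by rewrite /opx big_seq1 /= tsv_ract1 tsv_lact1. Qed.

Lemma opx_lmap s a x :
  tsv_lact a (opx s x) = opx [seq (a * p.1, p.2) | p <- s] x.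
Proof.
rewrite /opx big_map (big_morph (tsv_lact a) (tsv_lactDr a) (@tsv_lactx0 _ _ V a)).
by apply: eq_bigr => p _; rewrite tsv_lactA.
Qed.

Lemma opx_rmap s b x :
  tsv_ract (opx s x) b = opx [seq (p.1, p.2 * b) | p <- s] x.
Proof.
rewrite /opx big_map (big_morph (fun z : V => tsv_ract z b) (fun x y => @tsv_ractDl _ _ V x y b) (@tsv_ract0x _ _ V b)).
by apply: eq_bigr => p _ /=; rewrite tsv_lractC tsv_ractA.
Qed.

Lemma span_x0 (x0 : V) : tsv_simple V -> x0 <> tsv_zero V ->
  forall y, exists s, y = opx s x0.
Proof.
case=> _ hS hx0.
have hsub : tsv_sub (fun y => exists s, y = opx s x0).
  split; first by exists [::]; rewrite opx_nil.
  split; first by move=> x y [s ->] [t ->]; exists (s ++ t); rewrite opx_cat.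
  split; first by move=> a x [s ->]; eexists; apply: opx_lmap.
  by move=> x b [s ->]; eexists; apply: opx_rmap.
case: (hS _ hsub) => // H.
by case: hx0; apply: H; exists [:: (1, 1)]; rewrite opx_one.
Qed.

Variables (x0 : V) (H : forall y, exists s, y = opx s x0).

Definition sel (y : V) : seq (K * K) := proj1_sig (constructive_indefinite_description _ (H y)).
Lemma selP y : y = opx (sel y) x0.
Proof. exact: (proj2_sig (constructive_indefinite_description _ (H y))). Qed.

Definition mulw x y := opx (sel x) y.

Lemma mulw_x0 x : mulw x x0 = x.
Proof. by rewrite /mulw -selP. Qed.

Lemma mulwC x y : mulw x y = mulw y x.
Proof. by rewrite /mulw {1}(selP y) opx_comm -(selP x). Qed.

Lemma mulwD x y z : mulw x (tsv_add y z) = tsv_add (mulw x y) (mulw x z).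
Proof. exact: opxD. Qed.
Lemma mulw0 x : mulw x (tsv_zero V) = tsv_zero V.
Proof. exact: opx0. Qed.
Lemma mulwL x a y : mulw x (tsv_lact a y) = tsv_lact a (mulw x y).
Proof. exact: opxL. Qed.
Lemma mulwR x y b : mulw x (tsv_ract y b) = tsv_ract (mulw x y) b.
Proof. exact: opxR. Qed.

Lemma mulw_onto x : tsv_simple V -> x <> tsv_zero V -> forall z, exists y, z = mulw x y.
Proof.
case=> _ hS hx.
have hsub : tsv_sub (fun z => exists y, z = mulw x y).
  split; first by exists (tsv_zero V); rewrite mulw0.
  split; first by move=> a b [y ->] [z ->]; exists (tsv_add y z); rewrite mulwD.
  split; first by move=> a z [y ->]; exists (tsv_lact a y); rewrite mulwL.
  by move=> z b [y ->]; exists (tsv_ract y b); rewrite mulwR.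
case: (hS _ hsub) => // Hs.
by case: hx; apply: Hs; exists x0; rewrite mulw_x0.
Qed.

End Opx.



Section Coord.
Variables (K : fieldType) (k : {pred K}) (W : tsvs k) (m : nat) (e : 'I_m -> W).
Hypothesis ei : forall c, rcomb c e = tsv_zero W -> forall i, c i = 0.
Hypothesis es : forall x : W, exists c, x = rcomb c e.

Lemma rcombD c d : rcomb (fun i => c i + d i) e = tsv_add (rcomb c e) (rcomb d e).
Proof. by rewrite /rcomb -big_split; apply: eq_bigr => i _; apply: tsv_ractDr. Qed.

Lemma rcombZ c b : rcomb (fun i => c i * b) e = tsv_ract (rcomb c e) b.
Proof.
rewrite /rcomb (big_morph (fun z : W => tsv_ract z b) (fun x y => @tsv_ractDl _ _ W x y b) (@tsv_ract0x _ _ W b)).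
by apply: eq_bigr => i _; rewrite tsv_ractA.
Qed.

Lemma rcomb0 : rcomb (fun _ => 0) e = tsv_zero W.
Proof. by rewrite /rcomb big1 // => i _; rewrite tsv_ractx0. Qed.

Lemma rcomb_inj c d : rcomb c e = rcomb d e -> forall i, c i = d i.
Proof.
move=> h i; apply/eqP; rewrite -subr_eq0; apply/eqP; move: i; apply: ei.
apply: (@tsv_cancelr _ _ W (rcomb d e)); rewrite -rcombD tsv_add0 -h.
by rewrite /rcomb; apply: eq_bigr => j _; rewrite subrK.
Qed.

Definition tcoord (x : W) : 'I_m -> K := proj1_sig (constructive_indefinite_description _ (es x)).
Lemma coordP x : x = rcomb (tcoord x) e.
Proof. exact: (proj2_sig (constructive_indefinite_description _ (es x))). Qed.

Lemma coordD x y i : tcoord (tsv_add x y) i = tcoord x i + tcoord y i.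
Proof.
apply: (rcomb_inj (c := tcoord (tsv_add x y)) (d := fun i => tcoord x i + tcoord y i)).
by rewrite rcombD -!coordP.
Qed.

Lemma coordZ x b i : tcoord (tsv_ract x b) i = tcoord x i * b.
Proof.
apply: (rcomb_inj (c := tcoord (tsv_ract x b)) (d := fun i => tcoord x i * b)).
by rewrite rcombZ -!coordP.
Qed.

End Coord.

Lemma coord0 (K : fieldType) (k : {pred K}) (W : tsvs k) (m : nat) (e : 'I_m -> W)
  (ei : forall c, rcomb c e = tsv_zero W -> forall i, c i = 0)
  (es : forall x : W, exists c, x = rcomb c e) i : tcoord es (tsv_zero W) i = 0.
Proof.
have := coordD ei es (tsv_zero W) (tsv_zero W) i.
rewrite tsv_add0 => h.
by apply: (@addrI _ (tcoord es (tsv_zero W) i)); rewrite addr0 -h.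
Qed.

Section Main.
Variables (K : fieldType) (k : {pred K}) (W : tsvs k) (m : nat) (e : 'I_m -> W).
Hypothesis ei : forall c, rcomb c e = tsv_zero W -> forall i, c i = 0.
Hypothesis es : forall x : W, exists c, x = rcomb c e.
Hypothesis hS : tsv_simple W.
Variables (x0 : W) (i1 : 'I_m) (w1 : W).
Hypothesis hx0 : x0 <> tsv_zero W.
Hypothesis hw1 : tcoord es w1 i1 <> 0.

Definition Hs := span_x0 hS hx0.
Definition mw := mulw Hs.
Definition psi0 (x : W) := tcoord es x i1.

Lemma psi0D x y : psi0 (tsv_add x y) = psi0 x + psi0 y.
Proof. exact: coordD. Qed.
Lemma psi0Z x b : psi0 (tsv_ract x b) = psi0 x * b.
Proof. exact: coordZ. Qed.
Lemma psi00 : psi0 (tsv_zero W) = 0.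
Proof. exact: coord0. Qed.

Lemma ker0 x : (forall y, psi0 (mw x y) = 0) -> x = tsv_zero W.
Proof.
move=> h; apply: NNPP => hx.
have [y hy] := mulw_onto Hs hS hx w1.
by apply: hw1; rewrite hy; apply: h.
Qed.

Lemma expand x c : psi0 (mw x (rcomb c e)) = \sum_i psi0 (mw x (e i)) * c i.
Proof.
rewrite /rcomb (big_morph (fun y => psi0 (mw x y)) (id1 := 0) (op1 := +%R)).
- by apply: eq_bigr => i _; rewrite /mw mulwR psi0Z.
- by move=> y z; rewrite /mw mulwD psi0D.
- by rewrite /mw mulw0 psi00.
Qed.

Lemma phi_rlin x : rlin (fun y => psi0 (mw x y)).
Proof.
by split=> [y z | y b]; rewrite /mw ?mulwD ?psi0D ?mulwR ?psi0Z.
Qed.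

Definition phi (x : tsv_op W) : rdual W := exist _ _ (phi_rlin x).

Definition Mx : 'M[K]_m := \matrix_(i, j) psi0 (mw (e i) (e j)).

Lemma keyM (c : 'rV[K]_m) j :
  (c *m Mx) 0 j = psi0 (mw (rcomb (fun i => c 0 i) e) (e j)).
Proof.
rewrite !mxE /mw mulwC -/mw expand; apply: eq_bigr => i _.
by rewrite mxE mulrC /mw mulwC.
Qed.

Lemma Mx_unit : Mx \in unitmx.
Proof.
rewrite unitmxE unitfE; apply/negP => /det0P [v nz hv].
case/eqP: nz; apply/rowP => i; rewrite mxE.
have h0 : rcomb (fun i => v 0 i) e = tsv_zero W.
  apply: ker0 => y; rewrite (coordP es y) expand big1 // => j _.
  by have := keyM v j; rewrite hv mxE => <-; rewrite mul0r.
by rewrite (ei h0).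
Qed.

Lemma phi_surj (psi : rdual W) : exists x : tsv_op W, psi = phi x.
Proof.
case: psi => f [f1 f2].
pose v : 'rV[K]_m := \row_j f (e j).
pose c := v *m invmx Mx.
exists (rcomb (fun i => c 0 i) e).
apply: rd_eq => y /=.
have hT j : psi0 (mw (rcomb (fun i => c 0 i) e) (e j)) = f (e j).
  by rewrite -keyM /c mulmxKV ?Mx_unit // mxE.
rewrite (coordP es y) expand.
rewrite /rcomb (big_morph f f1 (id1 := 0)).
  by apply: eq_bigr => i _; rewrite f2 hT.
by rewrite -(tsv_ractx0 (tsv_zero W)) f2 mulr0.
Qed.

End Main.



Definition PP (K : fieldType) (k : {pred K}) (V : tsvs k) (n m : nat) :=
  tsv_simple V /\ ldim V n /\ rdim V m.

Lemma stepO (K : fieldType) (k : {pred K}) (V : tsvs k) n m :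
  PP V n m -> PP (tsv_op V) m n.
Proof.
case=> hS [hl hr]; split; first exact: simple_op.
by split; [apply/ldim_op | apply/rdim_op].
Qed.

Lemma stepR (K : fieldType) (k : {pred K}) (W : tsvs k) n m :
  PP W n m -> PP (rdual W) m n.
Proof.
move=> hP; have H1 : PP (tsv_op W) m n by apply: stepO.
case: hP => hS [hl [e [ei es]]].
have [x0 hx0] := hS.1.
have [i1 hi1] : exists i1, tcoord es x0 i1 <> 0.
  case: (pickP (fun i => tcoord es x0 i != 0)) => [i /eqP hi | h]; first by exists i.
  case: hx0; rewrite (coordP es x0) -(rcomb0 e); rewrite /rcomb.
  by apply: eq_bigr => i _; have := h i; rewrite /= => /negbFE /eqP ->.
pose f := @phi K k W m e ei es hS x0 i1 hx0.
apply: (@iso_transfer K k (tsv_op W) (rdual W) f) => //.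
- move=> x y; apply: rd_eq => z /=.
  rewrite /mw mulwC mulwD. rewrite (psi0D ei); congr (_ + _); congr psi0; apply: mulwC.
- move=> a x; apply: rd_eq => z /=.
  by rewrite /mw mulwC mulwR (psi0Z ei) mulrC mulwC.
- move=> x b; apply: rd_eq => z /=.
  by rewrite /mw mulwC !mulwL mulwC.
- move=> x hx; apply: (@ker0 K k W m e es hS x0 i1 x0 hx0 hi1) => y.
  by have := congr1 (fun g : rdual W => proj1_sig g y) hx.
- exact: (@phi_surj K k W m e ei es hS x0 i1 x0 hx0 hi1).
Qed.

Lemma stepL (K : fieldType) (k : {pred K}) (V : tsvs k) n m :
  PP V n m -> PP (ldual V) m n.
Proof. by move=> h; rewrite /ldual; apply: stepO; apply: stepR; apply: stepO. Qed.

Lemma iterR (K : fieldType) (k : {pred K}) (V : tsvs k) n m j :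
  PP V n m -> PP (iter j (@rdual K k) V) (if odd j then m else n) (if odd j then n else m).
Proof.
move=> h; elim: j => [|j IH] //=.
by case: (odd j) IH => /= /stepR.
Qed.

Lemma iterL (K : fieldType) (k : {pred K}) (V : tsvs k) n m j :
  PP V n m -> PP (iter j (@ldual K k) V) (if odd j then m else n) (if odd j then n else m).
Proof.
move=> h; elim: j => [|j IH] //=.
by case: (odd j) IH => /= /stepL.
Qed.

Theorem lemma4p2 (K : fieldType) (k : {pred K}) (hk : GRing.divring_closed k)
    (W : tsvs k) (n m : nat) :
  perfect_field K -> tsv_simple W -> ldim W n -> rdim W m ->
  forall i : int,
    (~~ odd `|i|%N -> ldim (idual i W) n /\ rdim (idual i W) m) /\
    (odd `|i|%N -> ldim (idual i W) m /\ rdim (idual i W) n).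
Proof.
move=> _ hS hl hr i.
have h : PP W n m by [].
case: i => j /=.
  by have := iterR j h; case: (odd j) => -[_ H]; split.
by move: (iterL j.+1 h) => /=; case: (odd j) => -[_ H]; split.
Qed.
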